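(* Work in the Poincaré ball model of $\mathbb{H}^3$ with the notation $S(x)$, $H(x)$, $P_{4,3}(a)$ below. Fix an integer $n>4$ and let $a=a_n>\sqrt2$ be the (unique) value for which the faces of $P_{4,3}(a)$ meet at dihedral angle $2\pi/n$. Consider $b$ with $b>\sqrt3$ and $b>a$, so that $P_{4,3}(b)$ is a finite cube lying inside $P_{4,3}(a)$. For a face $F$ of $P_{4,3}(b)$ (lying on $S(be_i)$ for some signed coordinate vector $e_i$), let $F'$ be the image of $F$ under the hyperbolic reflection (sphere inversion) in the corresponding face $S(ae_i)$ of $P_{4,3}(a)$. Then $F$ and $F'$ are the bottom and top of a prism over a square whose four lateral faces are hyperbolic rectangles. There is a unique value of $b$ (in the range $b>\max(a,\sqrt3)$) for which these lateral rectangles are squares.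
   Context: For $x\in\mathbb{R}^3$ with $|x|>1$, $S(x)$ is the sphere centered at $x$ with radius $\sqrt{|x|^2-1}$; its intersection with the unit ball is a hyperbolic plane. $H(x)$ is the unbounded component of $\mathbb{R}^3\setminus S(x)$. For $a>1$, $P_{4,3}(a)$ is the intersection of the unit ball with $H(ax)$ for all $x\in\{(\pm1,0,0),(0,\pm1,0),(0,0,\pm1)\}$ (a generalized hyperbolic cube). For $a>\sqrt2$ adjacent faces meet at angle $\alpha$ with $\cos\alpha=1/(a^2-1)$. *)

(* Defs.v *)
From Stdlib Require Import Reals.
Open Scope R_scope.

Definition R3 : Type := (R * R * R)%type.

Definition vadd (p q : R3) : R3 :=
  let '(p1, p2, p3) := p in let '(q1, q2, q3) := q in (p1 + q1, p2 + q2, p3 + q3).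
Definition vscale (c : R) (p : R3) : R3 :=
  let '(p1, p2, p3) := p in (c * p1, c * p2, c * p3).
Definition vsub (p q : R3) : R3 := vadd p (vscale (-1) q).
Definition dot (p q : R3) : R :=
  let '(p1, p2, p3) := p in let '(q1, q2, q3) := q in p1 * q1 + p2 * q2 + p3 * q3.
Definition norm2 (p : R3) : R := dot p p.

Inductive axis : Type := AX | AY | AZ.
Definition sgnR (s : bool) : R := if s then 1 else -1.
Definition svec (i : axis) (s : bool) : R3 :=
  match i with
  | AX => (sgnR s, 0, 0)
  | AY => (0, sgnR s, 0)
  | AZ => (0, 0, sgnR s)
  end.

Definition onS (x p : R3) : Prop := norm2 (vsub p x) = norm2 x - 1.
(* H(x): unbounded component of R^3 \ S(x), i.e. the exterior of the sphere *)
Definition inH (x p : R3) : Prop := norm2 (vsub p x) > norm2 x - 1.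
Definition inBall (p : R3) : Prop := norm2 p < 1.

Definition P43 (a : R) (p : R3) : Prop :=
  inBall p /\ forall (i : axis) (s : bool), inH (vscale a (svec i s)) p.

Definition arcosh (t : R) : R := ln (t + sqrt (t * t - 1)).
Definition hdist (p q : R3) : R :=
  arcosh (1 + 2 * norm2 (vsub p q) / ((1 - norm2 p) * (1 - norm2 q))).

(* hyperbolic reflection in the plane S(x) = inversion in the sphere S(x) *)
Definition hrefl (x p : R3) : R3 :=
  vadd x (vscale ((norm2 x - 1) / norm2 (vsub p x)) (vsub p x)).

Definition cube_vertex (b : R) (v : R3) : Prop :=
  inBall v /\ exists sx sy sz : bool,
    onS (vscale b (svec AX sx)) v /\ onS (vscale b (svec AY sy)) v /\
    onS (vscale b (svec AZ sz)) v.

Definition face_edge (b : R) (i : axis) (s : bool) (v w : R3) : Prop :=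
  cube_vertex b v /\ cube_vertex b w /\ v <> w /\
  onS (vscale b (svec i s)) v /\ onS (vscale b (svec i s)) w /\
  exists (j : axis) (t : bool), j <> i /\
    onS (vscale b (svec j t)) v /\ onS (vscale b (svec j t)) w.

(* The prism over the face F = P_{4,3}(b) cap S(b e) has top F' = image of F
   under the reflection in S(a e).  Its lateral face over the edge {v,w} of F
   is the quadrilateral v, w, w', v' (w' , v' the reflected vertices).
   It is a square iff its four sides have equal hyperbolic length. *)
Definition lateral_faces_are_squares (a b : R) : Prop :=
  forall (i : axis) (s : bool) (v w : R3),
    face_edge b i s v w ->
    let v' := hrefl (vscale a (svec i s)) v in
    let w' := hrefl (vscale a (svec i s)) w in
    hdist v w = hdist w w' /\ hdist w w' = hdist w' v' /\
    hdist w' v' = hdist v' v.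

(* Main.v *)
Require Import Defs.
From Stdlib Require Import Reals Lra Psatz.
Open Scope R_scope.

Definition coord (l : axis) (p : R3) : R :=
  let '(p1, p2, p3) := p in match l with AX => p1 | AY => p2 | AZ => p3 end.

Lemma sgn2 s : sgnR s * sgnR s = 1.
Proof. destruct s; simpl; ring. Qed.

Lemma n_sub_svec p a i s :
  norm2 (vsub p (vscale a (svec i s))) = norm2 p - 2*a*(sgnR s * coord i p) + a^2.
Proof.
  destruct p as [[p1 p2] p3]; destruct i; unfold norm2, vsub, vadd, vscale, dot, svec, coord;
  simpl; rewrite <- (sgn2 s); ring.
Qed.

Lemma n_svec a i s : norm2 (vscale a (svec i s)) = a^2.
Proof.
  destruct i; unfold norm2, vscale, dot, svec; simpl; rewrite <- (sgn2 s); ring.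
Qed.

Lemma onS_svec b i s p : onS (vscale b (svec i s)) p ->
  2*b*(sgnR s * coord i p) = norm2 p + 1.
Proof.
  unfold onS; rewrite n_sub_svec, n_svec; intro H; lra.
Qed.

Lemma norm2_coords p : norm2 p = coord AX p ^2 + coord AY p ^2 + coord AZ p ^2.
Proof. destruct p as [[p1 p2] p3]; unfold norm2, dot; simpl; ring. Qed.

Lemma norm2_sub_coords p q : norm2 (vsub p q) =
  (coord AX p - coord AX q)^2 + (coord AY p - coord AY q)^2 + (coord AZ p - coord AZ q)^2.
Proof. destruct p as [[p1 p2] p3]; destruct q as [[q1 q2] q3];
  unfold norm2, dot, vsub, vadd, vscale; simpl; ring. Qed.

Lemma coord_ext p q : coord AX p = coord AX q -> coord AY p = coord AY q ->
  coord AZ p = coord AZ q -> p = q.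
Proof. destruct p as [[p1 p2] p3]; destruct q as [[q1 q2] q3]; simpl; intros; subst; auto. Qed.

Lemma vertex_u b v : 0 < b -> cube_vertex b v ->
  let u := (norm2 v + 1)/(2*b) in
  0 < u /\ 3*u^2 - 2*b*u + 1 = 0 /\ 3*u^2 < 1 /\ norm2 v = 3*u^2 /\
  forall l, coord l v ^2 = u^2.
Proof.
  intros Hb [Hin [sx [sy [sz [H1 [H2 H3]]]]]] u.
  apply onS_svec in H1; apply onS_svec in H2; apply onS_svec in H3.
  assert (Hu : 2*b*u = norm2 v + 1) by (unfold u; field; lra).
  assert (Hn : 0 <= norm2 v) by (rewrite norm2_coords; nra).
  assert (E1 : sgnR sx * coord AX v = u) by nra.
  assert (E2 : sgnR sy * coord AY v = u) by nra.
  assert (E3 : sgnR sz * coord AZ v = u) by nra.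
  assert (F : forall s x, sgnR s * x = u -> x^2 = u^2).
  { intros s x E; rewrite <- E; replace ((sgnR s * x)^2) with ((sgnR s*sgnR s)*x^2) by ring;
    rewrite sgn2; ring. }
  assert (Hc : forall l, coord l v ^2 = u^2).
  { intros []; eauto. }
  assert (Hm : norm2 v = 3*u^2) by (rewrite norm2_coords, !Hc; ring).
  unfold inBall in Hin.
  assert (0 < u) by (unfold u; apply Rdiv_lt_0_compat; lra).
  repeat split; auto; lra.
Qed.

Lemma roots_eq b x y : 0 < x -> 0 < y -> 3*x^2 - 2*b*x + 1 = 0 -> 3*y^2 - 2*b*y + 1 = 0 ->
  3*x^2 < 1 -> 3*y^2 < 1 -> x = y.
Proof.
  intros.
  assert (E : (x - y) * (3*(x+y) - 2*b) = 0) by nra.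
  apply Rmult_integral in E as [E|E]; [lra|].
  assert (x*y = 1/3) by nra.
  assert (x*y < 1/3) by nra.
  lra.
Qed.

Lemma face_facts b i s v w : 0 < b -> face_edge b i s v w ->
  let u := (norm2 v + 1)/(2*b) in
  0 < u /\ 3*u^2 - 2*b*u + 1 = 0 /\ 3*u^2 < 1 /\ norm2 v = 3*u^2 /\ norm2 w = 3*u^2 /\
  coord i v = coord i w /\ sgnR s * coord i v = u /\ norm2 (vsub v w) = 4*u^2.
Proof.
  intros Hb [Vv [Vw [Hne [Si1 [Si2 [j [t [Hji [Sj1 Sj2]]]]]]]]] u.
  destruct (vertex_u b v Hb Vv) as [u0 [u1 [u2 [u3 u4]]]].
  destruct (vertex_u b w Hb Vw) as [w0 [w1 [w2 [w3 w4]]]].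
  fold u in u0, u1, u2, u3, u4.
  set (uw := (norm2 w + 1) / (2 * b)) in *.
  assert (Hue : u = uw) by (apply (roots_eq b); auto).
  rewrite <- Hue in *.
  assert (Cs : forall l r, onS (vscale b (svec l r)) v -> onS (vscale b (svec l r)) w ->
     coord l v = coord l w).
  { intros l r A B. apply onS_svec in A; apply onS_svec in B.
    assert (A' : sgnR r * coord l v = u) by (rewrite u3 in A; nra).
    assert (B' : sgnR r * coord l w = u) by (rewrite w3 in B; nra).
    rewrite <- B' in A'.
    rewrite <- (Rmult_1_l (coord l v)), <- (Rmult_1_l (coord l w)), <- (sgn2 r).
    rewrite !Rmult_assoc, A'; reflexivity. }
  pose proof (Cs _ _ Si1 Si2) as Ci.
  pose proof (Cs _ _ Sj1 Sj2) as Cj.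
  assert (T : forall l, coord l v <> coord l w -> (coord l v - coord l w)^2 = 4*u^2).
  { intros l Hl. pose proof (u4 l); pose proof (w4 l).
    assert (E : (coord l v - coord l w) * (coord l v + coord l w) = 0) by nra.
    apply Rmult_integral in E as [E|E]; [lra|].
    assert (coord l v = - coord l w) by lra. nra. }
  assert (Ai : sgnR s * coord i v = u) by (apply onS_svec in Si1; rewrite u3 in Si1; nra).
  repeat split; auto.
  rewrite norm2_sub_coords.
  destruct i, j; try congruence; simpl in Ci, Cj;
  rewrite ?Ci, ?Cj, ?Rminus_diag;
  match goal with
  | |- context [ (coord ?l v - coord ?l w)^2 ] =>
     rewrite (T l); [ring|];
     intro Hl; apply Hne; apply coord_ext; auto
  end.
Qed.

Lemma L_a x p k : norm2 (vsub p (vadd x (vscale k (vsub p x)))) = (1-k)^2 * norm2 (vsub p x).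
Proof. destruct p as [[p1 p2] p3]; destruct x as [[x1 x2] x3];
  unfold norm2, dot, vsub, vadd, vscale; simpl; ring. Qed.

Lemma L_b x p q k : norm2 (vsub (vadd x (vscale k (vsub p x))) (vadd x (vscale k (vsub q x))))
  = k^2 * norm2 (vsub p q).
Proof. destruct p as [[p1 p2] p3]; destruct q as [[q1 q2] q3]; destruct x as [[x1 x2] x3];
  unfold norm2, dot, vsub, vadd, vscale; simpl; ring. Qed.

Lemma L_c x p k : norm2 (vsub p x) * k = norm2 x - 1 ->
  1 - norm2 (vadd x (vscale k (vsub p x))) = k * (1 - norm2 p).
Proof.
  intro H; apply Rminus_diag_uniq.
  transitivity ((1-k)*(norm2 (vsub p x) * k - (norm2 x - 1))); [|rewrite H; ring].
  destruct p as [[p1 p2] p3]; destruct x as [[x1 x2] x3];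
  unfold norm2, dot, vsub, vadd, vscale; simpl; ring.
Qed.

Lemma n_sym p q : norm2 (vsub p q) = norm2 (vsub q p).
Proof. destruct p as [[p1 p2] p3]; destruct q as [[q1 q2] q3];
  unfold norm2, dot, vsub, vadd, vscale; simpl; ring. Qed.

Lemma key a b i s v w : 1 < a -> a < b -> face_edge b i s v w ->
  let x := vscale a (svec i s) in let v' := hrefl x v in let w' := hrefl x w in
  let u := (norm2 v + 1)/(2*b) in
  0 < u /\ 3*u^2 < 1 /\
  hdist v w = arcosh (1 + 2*(4*u^2)/((1-3*u^2)*(1-3*u^2))) /\
  hdist w w' = arcosh (1 + 2*(4*u^2*(b-a)^2/(a^2-1))/((1-3*u^2)*(1-3*u^2))) /\
  hdist w' v' = hdist v w /\ hdist v' v = hdist w w'.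
Proof.
  intros Ha Hab Hf x v' w' u.
  assert (Hb : 0 < b) by lra.
  destruct (face_facts b i s v w Hb Hf) as [u0 [u1 [u2 [nv [nw [Ci [Ai N]]]]]]].
  fold u in u0, u1, u2, nv, nw, Ci, Ai, N.
  set (D := a^2 - 1 + 2*u*(b-a)).
  assert (HD : 0 < D) by (unfold D; nra).
  assert (Dv : norm2 (vsub v x) = D) by (unfold x, D; rewrite n_sub_svec, Ai; lra).
  assert (Dw : norm2 (vsub w x) = D) by (unfold x, D; rewrite n_sub_svec, <- Ci, Ai; lra).
  assert (nx : norm2 x = a^2) by (unfold x; apply n_svec).
  set (k := (a^2-1)/D).
  assert (Hk : 0 < k) by (unfold k; apply Rdiv_lt_0_compat; nra).
  assert (Ev : v' = vadd x (vscale k (vsub v x))) by (unfold v', hrefl; rewrite nx, Dv; reflexivity).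
  assert (Ew : w' = vadd x (vscale k (vsub w x))) by (unfold w', hrefl; rewrite nx, Dw; reflexivity).
  assert (Kv : norm2 (vsub v x) * k = norm2 x - 1) by (rewrite Dv, nx; unfold k; field; lra).
  assert (Kw : norm2 (vsub w x) * k = norm2 x - 1) by (rewrite Dw, nx; unfold k; field; lra).
  pose proof (L_c _ _ _ Kv) as Cv. pose proof (L_c _ _ _ Kw) as Cw.
  rewrite <- Ev in Cv. rewrite <- Ew in Cw.
  assert (m0 : 1 - 3*u^2 <> 0) by lra.
  assert (ra : a^2 - 1 <> 0) by nra.
  split; [exact u0|]. split; [exact u2|].
  split; [unfold hdist; rewrite N, nv, nw; reflexivity|].
  split; [unfold hdist; f_equal; rewrite Cw, Ew, L_a, Dw, nw; unfold k, D; field|].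
  all: [> unfold D in HD; repeat split; intro; lra |].
  split.
  - unfold hdist; f_equal. rewrite Cv, Cw, Ev, Ew, L_b, n_sym, N, nv, nw.
    field; repeat split; intro; lra.
  - unfold hdist; f_equal. rewrite Cv, Cw, n_sym, Ev, Ew, L_a, L_a, Dv, Dw, nv, nw.
    field; repeat split; intro; lra.
Qed.

Lemma div_nonneg x y : 0 <= x -> 0 < y -> 0 <= x / y.
Proof. intros; unfold Rdiv; apply Rmult_le_pos; [auto| left; apply Rinv_0_lt_compat; auto]. Qed.

Lemma arcosh_inj t1 t2 : 1 <= t1 -> 1 <= t2 -> arcosh t1 = arcosh t2 -> t1 = t2.
Proof.
  unfold arcosh; intros H1 H2 H.
  pose proof (sqrt_pos (t1*t1-1)); pose proof (sqrt_pos (t2*t2-1)).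
  apply ln_inv in H; try lra.
  destruct (Rtotal_order t1 t2) as [L|[L|L]]; auto.
  - assert (sqrt (t1*t1-1) <= sqrt (t2*t2-1)) by (apply sqrt_le_1_alt; nra). lra.
  - assert (sqrt (t2*t2-1) <= sqrt (t1*t1-1)) by (apply sqrt_le_1_alt; nra). lra.
Qed.

Theorem mainTheorem2 :
  forall (n : nat), (4 < n)%nat ->
  forall a : R, a > sqrt 2 ->
    (* dihedral angle of P_{4,3}(a) is 2*pi/n:  cos(2 pi/n) = 1/(a^2-1) *)
    cos (2 * PI / INR n) = 1 / (a ^ 2 - 1) ->
    exists! b : R, (b > a /\ b > sqrt 3) /\ lateral_faces_are_squares a b.
Proof.
  intros n _ a Ha _.
  pose proof (sqrt_pos 2) as s2p.
  assert (s22 : sqrt 2 * sqrt 2 = 2) by (apply sqrt_sqrt; lra).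
  assert (Ha2 : 2 < a^2) by nra.
  assert (Ha1 : 1 < a) by nra.
  assert (s3 : sqrt 3 < 2).
  { replace 2 with (sqrt 4).
    - apply sqrt_lt_1_alt; lra.
    - replace 4 with (2^2) by ring; apply sqrt_pow2; lra. }
  set (r := sqrt (a^2 - 1)).
  assert (r1 : 1 < r) by (unfold r; rewrite <- sqrt_1 at 1; apply sqrt_lt_1_alt; lra).
  assert (r2 : r^2 = a^2 - 1) by (unfold r; apply pow2_sqrt; lra).
  exists (a + r). split.
  - split; [split; lra|].
    intros i s v w Hf.
    destruct (key a (a+r) i s v w Ha1 ltac:(lra) Hf) as [_ [_ [E1 [E2 [E3 E4]]]]].
    cbv zeta.
    replace (a + r - a) with r in E2 by ring.
    rewrite r2 in E2.
    replace (4 * ((norm2 v + 1) / (2 * (a + r))) ^ 2 * (a ^ 2 - 1) / (a ^ 2 - 1))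
      with (4 * ((norm2 v + 1) / (2 * (a + r))) ^ 2) in E2 by (field; lra).
    split; [rewrite E1, E2; reflexivity|].
    split; [rewrite E3, E1, E2; reflexivity|].
    rewrite E3, E4, E1, E2; reflexivity.
  - intros b [[Hba Hb3] Hsq].
    pose proof (sqrt_pos 3) as s3p.
    assert (s33 : sqrt 3 * sqrt 3 = 3) by (apply sqrt_sqrt; lra).
    assert (Hb2 : 3 < b^2) by nra.
    set (q := sqrt (b^2 - 3)).
    assert (q0 : 0 <= q) by apply sqrt_pos.
    assert (q2 : q^2 = b^2 - 3) by (unfold q; apply pow2_sqrt; lra).
    assert (qb : q < b) by nra.
    set (c := (b - q)/3).
    assert (c0 : 0 < c) by (unfold c; lra).
    assert (ceq : 3*c^2 - 2*b*c + 1 = 0) by (unfold c; nra).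
    assert (cbq : c * (b + q) = 1) by (unfold c; nra).
    assert (cb : c * b <= 1) by nra.
    assert (c3 : 3*c^2 < 1) by nra.
    set (v := (c, c, c) : R3). set (w := (c, c, -c) : R3).
    assert (Hf : face_edge b AX true v w).
    { unfold face_edge, cube_vertex, inBall, onS, v, w, norm2, dot, vsub, vadd, vscale, svec, sgnR; simpl.
      repeat split; try lra.
      - exists true, true, true; simpl; repeat split; lra.
      - exists true, true, false; simpl; repeat split; lra.
      - intro H; injection H; lra.
      - exists AY, true; simpl; repeat split; try lra; discriminate. }
    destruct (key a b AX true v w Ha1 Hba Hf) as [u0 [u3 [E1 [E2 _]]]].
    destruct (Hsq AX true v w Hf) as [E _].
    rewrite E1, E2 in E.
    set (u := (norm2 v + 1) / (2 * b)) in *.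
    assert (P : 0 < (1 - 3*u^2) * (1 - 3*u^2)) by nra.
    apply arcosh_inj in E.
    2: { assert (0 <= 2 * (4 * u ^ 2) / ((1 - 3 * u ^ 2) * (1 - 3 * u ^ 2)))
           by (apply div_nonneg; nra). lra. }
    2: { assert (0 <= 2 * (4 * u ^ 2 * (b - a) ^ 2 / (a ^ 2 - 1)) / ((1 - 3 * u ^ 2) * (1 - 3 * u ^ 2)))
           by (apply div_nonneg; [|lra]; apply Rmult_le_pos; [lra|]; apply div_nonneg; [apply Rmult_le_pos; [nra|apply pow2_ge_0]|nra]). lra. }
    set (Y := (b - a)^2 / (a^2 - 1)).
    assert (EY : 4*u^2*(b-a)^2/(a^2-1) = 4*u^2*Y) by (unfold Y; field; lra).
    rewrite EY in E.
    assert (E' : 4*u^2 = 4*u^2*Y).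
    { apply Rmult_eq_reg_r with (2 / ((1 - 3*u^2)*(1-3*u^2))).
      - replace (4*u^2 * (2 / ((1 - 3*u^2)*(1-3*u^2)))) with
          (2 * (4 * u ^ 2) / ((1 - 3 * u ^ 2) * (1 - 3 * u ^ 2))) by (field; lra).
        replace (4*u^2*Y * (2 / ((1 - 3*u^2)*(1-3*u^2)))) with
          (2 * (4 * u ^ 2 * Y) / ((1 - 3 * u ^ 2) * (1 - 3 * u ^ 2))) by (field; lra).
        lra.
      - assert (0 < 2 / ((1 - 3*u^2)*(1-3*u^2))) by (apply Rdiv_lt_0_compat; lra). lra. }
    assert (Y1 : Y = 1).
    { assert (Z : (4*u^2) * (Y - 1) = 0) by lra.
      apply Rmult_integral in Z as [Z|Z]; nra. }
    assert (X : (b - a)^2 = a^2 - 1).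
    { unfold Y in Y1. apply (Rmult_eq_compat_r (a^2-1)) in Y1.
      field_simplify in Y1; lra. }
    unfold r; rewrite <- X, sqrt_pow2; lra.
Qed.
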